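(* In the standing setup (with an arbitrary nonempty finite set of fluids), for every $t_{\mathrm b}\in I$ and every $t\in I$ with $t\ge t_{\mathrm b}$, $$|x(t)|\le |x(t_{\mathrm b})|+\sqrt{2}\,c\,l\,(t-t_{\mathrm b}).$$
   Context: Standing setup. Fix real constants $c>0$ and $l>0$, a nonempty finite index set $A$, and constants $w_\alpha\in[-1,1]$ for $\alpha\in A$. Let $I\subseteq\mathbb{R}$ be an interval and let $x,y_{\mathrm r},y_{\mathrm i},h,z_\alpha$ ($\alpha\in A$) be real $C^1$ functions of $t\in I$ with $h>0$ and $z_\alpha\ge 0$. Define $\xi(t)=x(t)^2+\sum_{\beta\in A}\frac{1+w_\beta}{2}z_\beta(t)^2$. Assume that on $I$: $\dot x=\big[-x+4c\,y_{\mathrm r}y_{\mathrm i}+x\,\xi\big]h$, $\dot y_{\mathrm r}=\big[\xi\,y_{\mathrm r}-c\,x\,y_{\mathrm i}\big]h$, $\dot y_{\mathrm i}=\big[\xi\,y_{\mathrm i}+c\,x\,y_{\mathrm r}\big]h$, $\dot z_\alpha=\big[-\tfrac{1+w_\alpha}{2}+\xi\big]z_\alpha h$, $\dot h=-\xi h^2$, together with the constraints $x^2+4y_{\mathrm r}^2+\sum_{\beta\in A}z_\beta^2=1$ and $y_{\mathrm r}^2+y_{\mathrm i}^2=\frac{l^2}{2h^2}$. (This autonomous system is equivalent to FLRW cosmology of a canonical scalar with potential $m^2f^2(1-\cos(\phi/f))$ coupled to perfect fluids with state parameters $w_\alpha$; there $h=(d-1)H$, $\xi=\epsilon/(d-1)$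 with $\epsilon=-\dot H/H^2$, and $cl=m/\sqrt2$.) *)

(* Defs.v *)
From Stdlib Require Import Reals.
Open Scope R_scope.

Definition is_interval (I : R -> Prop) : Prop :=
  forall a b s, I a -> I b -> a <= s <= b -> I s.

(* f is differentiable relative to I at every point of I, with derivative f'
   (one-sided at endpoints that belong to I). *)
Definition has_deriv_on (I : R -> Prop) (f f' : R -> R) : Prop :=
  forall t, I t ->
    forall eps, 0 < eps -> exists del, 0 < del /\
      forall s, I s -> s <> t -> Rabs (s - t) < del ->
        Rabs ((f s - f t) / (s - t) - f' t) < eps.

Definition cont_on (I : R -> Prop) (f : R -> R) : Prop :=
  forall t, I t ->
    forall eps, 0 < eps -> exists del, 0 < del /\
      forall s, I s -> Rabs (s - t) < del -> Rabs (f s - f t) < eps.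

Definition C1_on (I : R -> Prop) (f f' : R -> R) : Prop :=
  has_deriv_on I f f' /\ cont_on I f'.

Fixpoint fsum (n : nat) (g : nat -> R) : R :=
  match n with
  | O => 0
  | S m => fsum m g + g m
  end.

(* Main.v *)
Require Import Defs.
From Stdlib Require Import Reals Lra Lia Psatz.
Open Scope R_scope.

Lemma deriv_cont I g g' s : has_deriv_on I g g' -> I s ->
  forall e, 0 < e -> exists d, 0 < d /\ forall v, I v -> Rabs (v - s) < d -> Rabs (g v - g s) < e.
Proof.
  intros H Hs e He.
  destruct (H s Hs 1 Rlt_0_1) as [del [Hd H1]].
  set (M := Rabs (g' s) + 1).
  assert (HM : 0 < M) by (unfold M; pose proof (Rabs_pos (g' s)); lra).
  exists (Rmin del (e / M)). split.
  { apply Rmin_glb_lt; [lra| apply Rdiv_lt_0_compat; lra]. }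
  intros v Hv Hvs.
  destruct (Req_dec v s) as [->|Hne].
  { replace (g s - g s) with 0 by ring. rewrite Rabs_R0; lra. }
  assert (Hl : Rabs (v - s) < del) by (eapply Rlt_le_trans; [exact Hvs| apply Rmin_l]).
  assert (Hl2 : Rabs (v - s) < e / M) by (eapply Rlt_le_trans; [exact Hvs| apply Rmin_r]).
  specialize (H1 v Hv Hne Hl).
  set (q := (g v - g s) / (v - s)) in *.
  assert (Hq : Rabs q < M).
  { replace q with ((q - g' s) + g' s) by ring.
    eapply Rle_lt_trans; [apply Rabs_triang|]. unfold M; lra. }
  replace (g v - g s) with (q * (v - s)) by (unfold q; field; lra).
  rewrite Rabs_mult.
  assert (Hvp : 0 < Rabs (v - s)) by (apply Rabs_pos_lt; lra).
  apply Rle_lt_trans with (M * Rabs (v - s)).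
  { apply Rmult_le_compat_r; lra. }
  replace e with (M * (e / M)) by (field; lra).
  apply Rmult_lt_compat_l; lra.
Qed.

Lemma deriv_upper I g g' s : has_deriv_on I g g' -> I s ->
  forall e, 0 < e -> exists d, 0 < d /\ forall v, I v -> s < v < s + d ->
     g v < g s + (g' s + e) * (v - s).
Proof.
  intros H Hs e He.
  destruct (H s Hs e He) as [del [Hd H1]].
  exists del. split; auto. intros v Hv Hvs.
  assert (Hne : v <> s) by lra.
  assert (Hl : Rabs (v - s) < del) by (rewrite Rabs_right; lra).
  specialize (H1 v Hv Hne Hl).
  apply Rabs_def2 in H1. destruct H1 as [H1 _].
  set (q := (g v - g s) / (v - s)) in *.
  replace (g v) with (g s + q * (v - s)) by (unfold q; field; lra).
  apply Rplus_lt_compat_l. apply Rmult_lt_compat_r; lra.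
Qed.

Lemma key I g g' a b C K : is_interval I -> has_deriv_on I g g' -> I a -> I b -> a <= b ->
  0 <= K -> g a <= C ->
  (forall u, a <= u <= b -> C + K * (u - a) < g u -> g' u <= K) ->
  g b <= C + K * (b - a).
Proof.
  intros HI Hd Ha Hb Hab HK Hga Hder.
  assert (HIab : forall v, a <= v <= b -> I v) by (intros v Hv; exact (HI a b v Ha Hb Hv)).
  assert (Main : forall e, 0 < e -> g b <= C + K*(b-a) + e*(b-a) + e).
  { intros e He.
    set (B := fun v => C + K*(v-a) + e*(v-a) + e).
    set (E := fun u => a <= u <= b /\ forall v, a <= v <= u -> g v <= B v).
    assert (Ea : E a).
    { split; [lra|]. intros v Hv. replace v with a by lra. unfold B. lra. }
    assert (Hbd : bound E).
    { exists b. intros u [Hu _]. lra. }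
    destruct (completeness E Hbd (ex_intro _ a Ea)) as [s [Hub Hlub]].
    assert (Has : a <= s) by (apply Hub; exact Ea).
    assert (Hsb : s <= b) by (apply Hlub; intros u [Hu _]; lra).
    assert (Is : I s) by (apply HIab; lra).
    assert (Step1 : forall v, a <= v < s -> g v <= B v).
    { intros v Hv. destruct (Rle_dec (g v) (B v)) as [|Hn]; auto.
      exfalso. assert (s <= v); [|lra].
      apply Hlub. intros u [Hu Hu2].
      destruct (Rle_dec u v); auto. exfalso. apply Hn. apply Hu2. lra. }
    assert (Step2 : g s <= B s).
    { destruct (Rle_dec (g s) (B s)) as [|Hn]; auto. exfalso.
      destruct (Req_dec s a) as [->|Hsa].
      { apply Hn. unfold B. lra. }
      destruct (deriv_cont I g g' s Hd Is (g s - B s)) as [d [Hd0 Hc]]; [lra|].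
      set (v := Rmax a (s - d/2)).
      assert (Hv1 : a <= v) by apply Rmax_l.
      assert (Hv2 : s - d/2 <= v) by apply Rmax_r.
      assert (Hv3 : v < s) by (unfold v; apply Rmax_lub_lt; lra).
      specialize (Hc v (HIab v ltac:(lra)) ltac:(rewrite Rabs_left; lra)).
      apply Rabs_def2 in Hc.
      specialize (Step1 v ltac:(lra)). unfold B in *. nra. }
    assert (Step3 : s = b).
    { destruct (Req_dec s b) as [|Hne]; auto. exfalso.
      assert (Hsb' : s < b) by lra.
      assert (Hloc : exists d, 0 < d /\ forall v, s < v < s + d -> v <= b -> g v <= B v).
      { destruct (Rlt_le_dec (C + K*(s-a)) (g s)) as [Hgt|Hle].
        - specialize (Hder s ltac:(lra) Hgt).
          destruct (deriv_upper I g g' s Hd Is e He) as [d [Hd0 Hu]].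
          exists d. split; auto. intros v Hv Hvb.
          specialize (Hu v (HIab v ltac:(lra)) Hv).
          unfold B in *. nra.
        - destruct (deriv_cont I g g' s Hd Is e He) as [d [Hd0 Hc]].
          exists d. split; auto. intros v Hv Hvb.
          specialize (Hc v (HIab v ltac:(lra)) ltac:(rewrite Rabs_right; lra)).
          apply Rabs_def2 in Hc. unfold B in *. nra. }
      destruct Hloc as [d [Hd0 Hloc]].
      set (u := Rmin b (s + d/2)).
      assert (Hu1 : u <= b) by apply Rmin_l.
      assert (Hu2 : u <= s + d/2) by apply Rmin_r.
      assert (Hu3 : s < u) by (unfold u; apply Rmin_glb_lt; lra).
      assert (Eu : E u).
      { split; [lra|]. intros v Hv.
        destruct (Rlt_le_dec v s); [apply Step1; lra|].
        destruct (Req_dec v s) as [->|]; [exact Step2|].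
        apply Hloc; lra. }
      specialize (Hub u Eu). lra. }
    subst s. unfold B in Step2. lra. }
  destruct (Rle_dec (g b) (C + K * (b - a))) as [|Hn]; auto. exfalso.
  set (e := (g b - C - K*(b-a)) / (2 * (b - a + 1))).
  assert (He : 0 < e) by (unfold e; apply Rdiv_lt_0_compat; lra).
  specialize (Main e He).
  assert (e * (b - a) + e = (g b - C - K*(b-a)) / 2) by (unfold e; field; lra).
  lra.
Qed.
Lemma fsum_le n f g : (forall b, (b < n)%nat -> f b <= g b) -> fsum n f <= fsum n g.
Proof.
  induction n; simpl; intros H; [lra|].
  apply Rplus_le_compat; [apply IHn; intros; apply H; lia| apply H; lia].
Qed.

Lemma fsum_nonneg n f : (forall b, (b < n)%nat -> 0 <= f b) -> 0 <= fsum n f.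
Proof.
  intros H. replace 0 with (fsum n (fun _ => 0)).
  - apply fsum_le; auto.
  - induction n; simpl; auto. rewrite IHn; [ring|]. intros; apply H; lia.
Qed.

Lemma neg_deriv I g g' : has_deriv_on I g g' -> has_deriv_on I (fun t => - g t) (fun t => - g' t).
Proof.
  intros H t Ht eps He. destruct (H t Ht eps He) as [d [Hd H1]].
  exists d; split; auto. intros s Hs Hne Hl.
  replace ((- g s - - g t) / (s - t) - - g' t) with (- ((g s - g t) / (s - t) - g' t))
    by (field; lra).
  rewrite Rabs_Ropp. auto.
Qed.

(* Fluids are indexed by A = {0, ..., n-1}, n >= 1. *)
Theorem lemma1
  (c l : R) (n : nat) (w : nat -> R) (I : R -> Prop)
  (x yr yi h : R -> R) (z : nat -> R -> R)
  (x' yr' yi' h' : R -> R) (z' : nat -> R -> R) :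
  0 < c -> 0 < l -> (0 < n)%nat ->
  (forall a, (a < n)%nat -> -1 <= w a <= 1) ->
  is_interval I ->
  C1_on I x x' -> C1_on I yr yr' -> C1_on I yi yi' -> C1_on I h h' ->
  (forall a, (a < n)%nat -> C1_on I (z a) (z' a)) ->
  (forall t, I t -> 0 < h t) ->
  (forall a t, (a < n)%nat -> I t -> 0 <= z a t) ->
  let xi := fun t => x t ^ 2 + fsum n (fun b => (1 + w b) / 2 * z b t ^ 2) in
  (forall t, I t -> x' t = (- x t + 4 * c * yr t * yi t + x t * xi t) * h t) ->
  (forall t, I t -> yr' t = (xi t * yr t - c * x t * yi t) * h t) ->
  (forall t, I t -> yi' t = (xi t * yi t + c * x t * yr t) * h t) ->
  (forall a t, (a < n)%nat -> I t ->
      z' a t = (- ((1 + w a) / 2) + xi t) * z a t * h t) ->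
  (forall t, I t -> h' t = - xi t * h t ^ 2) ->
  (forall t, I t -> x t ^ 2 + 4 * yr t ^ 2 + fsum n (fun b => z b t ^ 2) = 1) ->
  (forall t, I t -> yr t ^ 2 + yi t ^ 2 = l ^ 2 / (2 * h t ^ 2)) ->
  forall tb t, I tb -> I t -> tb <= t ->
    Rabs (x t) <= Rabs (x tb) + sqrt 2 * c * l * (t - tb).
Proof.
  intros Hc Hl Hn Hw HI [Hdx _] _ _ _ _ Hh Hz xi Hx' _ _ _ _ Hcon Hcy tb t Htb Ht Hle.
  set (K := sqrt 2 * c * l).
  assert (Hs2 : sqrt 2 * sqrt 2 = 2) by (apply sqrt_sqrt; lra).
  assert (Hs2p : 0 < sqrt 2) by (apply sqrt_lt_R0; lra).
  assert (HK : 0 <= K) by (unfold K; apply Rmult_le_pos; [|lra]; apply Rmult_le_pos; lra).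
  assert (Bxi : forall u, I u -> xi u <= 1).
  { intros u Hu. unfold xi.
    assert (fsum n (fun b => (1 + w b) / 2 * z b u ^ 2) <= fsum n (fun b => z b u ^ 2)).
    { apply fsum_le. intros b Hb. specialize (Hw b Hb).
      assert (0 <= z b u ^ 2) by (apply pow2_ge_0). nra. }
    specialize (Hcon u Hu). assert (0 <= yr u ^ 2) by apply pow2_ge_0. lra. }
  assert (Bcross : forall u, I u -> Rabs (4 * c * yr u * yi u * h u) <= K).
  { intros u Hu.
    assert (Hyr : yr u ^ 2 <= 1/4).
    { specialize (Hcon u Hu).
      assert (0 <= fsum n (fun b => z b u ^ 2)) by (apply fsum_nonneg; intros; apply pow2_ge_0).
      assert (0 <= x u ^ 2) by apply pow2_ge_0. lra. }
    specialize (Hcy u Hu). specialize (Hh u Hu).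
    assert (Hyi : yi u ^ 2 * h u ^ 2 <= l ^ 2 / 2).
    { assert (yi u ^ 2 <= l ^ 2 / (2 * h u ^ 2)) by (assert (0 <= yr u ^ 2) by apply pow2_ge_0; lra).
      apply Rmult_le_compat_r with (r := h u ^ 2) in H; [|apply pow2_ge_0].
      replace (l ^ 2 / (2 * h u ^ 2) * h u ^ 2) with (l ^ 2 / 2) in H by (field; lra). lra. }
    set (q := 4 * c * yr u * yi u * h u).
    assert (Hq : q ^ 2 <= K ^ 2).
    { unfold q, K.
      replace ((4 * c * yr u * yi u * h u) ^ 2) with (16 * c ^ 2 * yr u ^ 2 * (yi u ^ 2 * h u ^ 2)) by ring.
      replace ((sqrt 2 * c * l) ^ 2) with ((sqrt 2 * sqrt 2) * c ^ 2 * l ^ 2) by ring.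
      rewrite Hs2.
      assert (0 <= yi u ^ 2 * h u ^ 2) by (apply Rmult_le_pos; apply pow2_ge_0).
      assert (0 <= yr u ^ 2) by apply pow2_ge_0.
      assert (0 <= c^2) by apply pow2_ge_0.
      assert (yr u ^ 2 * (yi u ^ 2 * h u ^ 2) <= 1/4 * (l^2/2)) by (apply Rmult_le_compat; lra).
      nra. }
    rewrite <- (Rabs_right K) by lra.
    apply Rsqr_le_abs_0. unfold Rsqr. nra. }
  assert (Hkey : forall g g', has_deriv_on I g g' ->
     (forall u, I u -> 0 < g u -> g' u <= K) -> g tb <= Rabs (x tb) ->
     g t <= Rabs (x tb) + K * (t - tb)).
  { intros g g' Hd Hg Hgt.
    apply (key I g g' tb t (Rabs (x tb)) K HI Hd Htb Ht Hle HK Hgt).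
    intros u Hu Hgu. apply Hg.
    - exact (HI tb t u Htb Ht Hu).
    - pose proof (Rabs_pos (x tb)). nra. }
  assert (H1 : x t <= Rabs (x tb) + K * (t - tb)).
  { apply (Hkey x x' Hdx); [|apply Rle_abs].
    intros u Hu Hxu. rewrite (Hx' u Hu).
    specialize (Bxi u Hu). specialize (Bcross u Hu). specialize (Hh u Hu).
    pose proof (Rle_abs (4 * c * yr u * yi u * h u)).
    assert (0 <= x u * (1 - xi u) * h u) by (apply Rmult_le_pos; [apply Rmult_le_pos|]; lra).
    nra. }
  assert (H2 : - x t <= Rabs (x tb) + K * (t - tb)).
  { apply (Hkey (fun u => - x u) (fun u => - x' u) (neg_deriv I x x' Hdx));
      [|rewrite <- Rabs_Ropp; apply Rle_abs].
    intros u Hu Hxu. rewrite (Hx' u Hu).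
    specialize (Bxi u Hu). specialize (Bcross u Hu). specialize (Hh u Hu).
    pose proof (Rle_abs (- (4 * c * yr u * yi u * h u))). rewrite Rabs_Ropp in *.
    assert (0 <= - x u * (1 - xi u) * h u) by (apply Rmult_le_pos; [apply Rmult_le_pos|]; lra).
    nra. }
  unfold K in *. unfold Rabs at 1. destruct (Rcase_abs (x t)); lra.
Qed.
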